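(* Let $S$ be any finite set of states containing $\text{␣}$. Let $\mathcal{G}$ be the 4-CAS with state set $S$, cells $a_1=(-1,0)$, $a_2=(0,-1)$, $g=(0,0)$, $j=(1,-1)$, $d=(-1,1)$, $h=(1,0)$, $e=(0,1)$, $f=(1,1)$, $i=(2,0)$, $c=(0,2)$, $b_1=(2,1)$, $b_2=(1,2)$ (so $|L|=12$), sources $\{a_1,a_2\}$, and transition functions given as follows, where for a cell $x$ and $p,q\in\{1,\dots,5\}$ the notation $x\leftarrow p;q$ means $f_x(s_1,\dots,s_5,t)=s_p$ if $t$ is even and $=s_q$ if $t$ is odd (equivalently, for $t\ge1$, $C_{t,\iota}(x)=C_{t-1,\iota}(x+n_p)$ if $t$ is even and $C_{t-1,\iota}(x+n_q)$ if $t$ is odd, with $(n_1,\dots,n_5)=N_4$): $b_1,b_2,e,h\leftarrow 1;2$; $c,d\leftarrow 2;5$; $f,g\leftarrow 2;1$; $i,j\leftarrow 5;1$. Then $\mathcal{G}$ is a channel from $a_1$ to $b_1$ with delay $5$ and a channel from $a_2$ to $b_2$ with delay $5$, and $\mathcal{G}$ crosses these two channels. Consequently its maximum delay $\max\{\delta_1,\delta_2\}$ and mean delay $(\delta_1+\delta_2)/2$ both equal $5$, and its size $|L|$ equals $12$.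
   Context: A cellular automaton with sources (CAS) is a tuple $(L,A,S,N,\{f_c\}_{c\in L\setminus A})$ where $L\subseteq\mathbb{Z}^2$ is the set of cells, $A\subseteq L$ the sources, $S$ a finite set of states containing a blank state $\text{␣}$, $N=(n_1,\dots,n_\nu)$ a tuple of distinct offsets containing $0$, and $f_c:S^\nu\times\mathbb{N}\to S$ transition functions for non-sources (not depending on the $i$-th argument when $c+n_i\notin L$). A message is a function $m:\{0,\dots,r\}\to S\setminus\{\text{␣}\}$, $r=\lambda(m)$ its length; an input $\iota$ assigns a message to each source. Configurations: $C_{0,\iota}(c)=\iota(c)(0)$ for sources, $C_{0,\iota}(c)=\text{␣}$ for non-sources (blank-initialization); $C_{t+1,\iota}(c)=\iota(c)(t+1)$ if $c\in A$ and $t<\lambda(\iota(c))$, $=\text{␣}$ if $c\in A$ and $t\ge\lambda(\iota(c))$, and $=f_c(C_{t,\iota}(c+n_1),\dots,C_{t,\iota}(c+n_\nu),t+1)$ otherwise. A 4-CAS has $N=N_4=((-1,0),(0,-1),(1,0),(0,1),(0,0))$. Channel: $\mathcal{C}$ is a channel from $x$ to $y$ with delay $\delta$ if for all $t\in\mathbb{N}$ and all inputs $\iota$, $C_{t,\iota}(y)=C_{t-\delta,\iota}(x)$ for $t\ge\delta$ and $C_{t,\iota}(y)=\text{␣}$ for $t<\delta$. External boundary: viewing cells as unit squares in $\mathbb{R}^2$, a finite connected (under orthogonal adjacency) $L$ has an external boundary, a cyclic sequence $(e_0,\dots,e_{k-1})$ of unit edges forming a simple closed curve (consecutive edges meet at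 distinct vertices), each $e_i$ separating a cell $\bar e_i\in L$ from a cell not in $L$, with $L$ inside the bounded region; unique up to reversal and cyclic shift. Crossing: a CAS that is a channel from $a_1$ to $b_1$ and from $a_2$ to $b_2$ (four distinct cells, $a_1,a_2$ sources) crosses these channels if (i) $L$ is connected; (ii) whenever $\bar e_i=\bar e_j\in\{a_1,a_2,b_1,b_2\}$ with $i\le j$, either $|\{\bar e_l:i\le l\le j\}|=1$ or $|\{\bar e_l: l\le i\text{ or }l\ge j\}|=1$; (iii) there are $\alpha<\beta<\gamma<\delta$ with $(\bar e_\alpha,\bar e_\beta,\bar e_\gamma,\bar e_\delta)$ a cyclic permutation of $(a_1,a_2,b_1,b_2)$ or of $(b_2,b_1,a_2,a_1)$. *)

(* Defs.v *)
From Stdlib Require Import ZArith List Bool Arith Lia.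
Import ListNotations.
Open Scope Z_scope.

Definition cell := (Z * Z)%type.

Definition ceqb (c d : cell) : bool := Z.eqb (fst c) (fst d) && Z.eqb (snd c) (snd d).
Definition memb (c : cell) (l : list cell) : bool := existsb (ceqb c) l.
Definition addc (c n : cell) : cell := (fst c + fst n, snd c + snd n).

(* Orthogonal adjacency of cells (also used for unit lattice edges). *)
Definition adjc (c d : cell) : Prop := Z.abs (fst c - fst d) + Z.abs (snd c - snd d) = 1.

(* A CAS over a state type S: the finite cell set L (list), the sources A,
   the blank state, the neighbourhood tuple N = (n_1,...,n_nu) (a list),
   and the transition functions f_c : S^nu x N -> S (argument list of length nu). *)
Record CAS (S : Type) := mkCAS {
  cells : list cell;
  sources : list cell;
  blank : S;
  nbhd : list cell;
  trans : cell -> list S -> nat -> S }.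
Arguments cells {S}. Arguments sources {S}. Arguments blank {S}.
Arguments nbhd {S}. Arguments trans {S}.

Definition is_CAS {S : Type} (G : CAS S) : Prop :=
  NoDup (cells G) /\
  incl (sources G) (cells G) /\
  NoDup (nbhd G) /\ In (0, 0) (nbhd G) /\
  (forall c, In c (cells G) -> ~ In c (sources G) ->
     forall i, (i < length (nbhd G))%nat ->
       ~ In (addc c (nth i (nbhd G) (0, 0))) (cells G) ->
       forall (s s' : list S) (t : nat),
         length s = length (nbhd G) -> length s' = length (nbhd G) ->
         (forall j, j <> i -> nth j s (blank G) = nth j s' (blank G)) ->
         trans G c s t = trans G c s' t).

Definition N4 : list cell := [(-1, 0); (0, -1); (1, 0); (0, 1); (0, 0)].

Definition is_4CAS {S : Type} (G : CAS S) : Prop := is_CAS G /\ nbhd G = N4.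

(** A message m : {0..r} -> S \ {blank} is represented by
    the pair (r, m) with m k <> blank for k <= r (values beyond r are irrelevant). *)
Definition input (S : Type) := cell -> (nat * (nat -> S))%type.

Definition valid_input {S : Type} (G : CAS S) (iota : input S) : Prop :=
  forall c, In c (sources G) ->
    forall k, (k <= fst (iota c))%nat -> snd (iota c) k <> blank G.

(* Configurations C_{t,iota}; cells outside L are given the blank state
   (the transition functions do not depend on them anyway). *)
Fixpoint conf {St : Type} (G : CAS St) (iota : input St) (t : nat) (c : cell) : St :=
  match t with
  | O => if memb c (sources G) then snd (iota c) 0%nat else blank G
  | S t' =>
      if memb c (sources G) then
        (if Nat.ltb t' (fst (iota c)) then snd (iota c) (S t') else blank G)
      else if memb c (cells G) then
        trans G c (map (fun n => conf G iota t' (addc c n)) (nbhd G)) (S t')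
      else blank G
  end.

Definition channel {S : Type} (G : CAS S) (x y : cell) (delta : nat) : Prop :=
  forall iota : input S, valid_input G iota ->
    forall t : nat,
      ((delta <= t)%nat -> conf G iota t y = conf G iota (t - delta) x) /\
      ((t < delta)%nat -> conf G iota t y = blank G).

Fixpoint chain (p : list cell) : Prop :=
  match p with
  | a :: ((b :: _) as rest) => adjc a b /\ chain rest
  | _ => True
  end.

Definition connected (L : list cell) : Prop :=
  forall x y, In x L -> In y L ->
    exists p : list cell, Forall (fun z => In z L) p /\ chain (x :: p) /\ last (x :: p) x = y.

(* Cell (x,y) is the unit square [x,x+1] x [y,y+1]; lattice points are vertices.
   A boundary is given by its cyclic vertex list vs = [v_0;...;v_{k-1}];
   edge e_i joins v_i and v_{(i+1) mod k}. *)
Definition vtx (vs : list cell) (i : nat) : cell := nth i vs (0, 0).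
Definition vnext (vs : list cell) (i : nat) : cell := nth ((i + 1) mod length vs) vs (0, 0).

(* The two cells on either side of the unit edge u--v. *)
Definition edge_cells (u v : cell) : cell * cell :=
  if Z.eqb (snd u) (snd v) then
    let X := Z.min (fst u) (fst v) in ((X, snd u), (X, snd u - 1))
  else
    let Y := Z.min (snd u) (snd v) in ((fst u, Y), (fst u - 1, Y)).

(* \bar e : the cell of L adjacent to the edge u--v. *)
Definition ebar (L : list cell) (u v : cell) : cell :=
  let p := edge_cells u v in if memb (fst p) L then fst p else snd p.

Definition ebar_at (L vs : list cell) (i : nat) : cell := ebar L (vtx vs i) (vnext vs i).

Definition separating (L : list cell) (u v : cell) : Prop :=
  let p := edge_cells u v in memb (fst p) L <> memb (snd p) L.

(* Number of edges of the curve crossed by the horizontal ray from the centre of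
   cell (x,y) to the right; the cell lies in the bounded region iff it is odd. *)
Definition ray_hits (c u v : cell) : bool :=
  Z.eqb (fst u) (fst v) && Z.eqb (Z.min (snd u) (snd v)) (snd c) && Z.ltb (fst c) (fst u).

Definition ray_count (vs : list cell) (c : cell) : nat :=
  length (filter (fun i => ray_hits c (vtx vs i) (vnext vs i)) (seq 0 (length vs))).

Definition inside_curve (vs : list cell) (c : cell) : Prop := Nat.odd (ray_count vs c) = true.

Definition external_boundary (L vs : list cell) : Prop :=
  (* simple closed curve made of unit edges *)
  (3 <= length vs)%nat /\ NoDup vs /\
  (forall i, (i < length vs)%nat -> adjc (vtx vs i) (vnext vs i)) /\
  (forall i, (i < length vs)%nat -> separating L (vtx vs i) (vnext vs i)) /\
  (forall c, In c L -> inside_curve vs c).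

Definition cyc_perm (l : list cell) (w x y z : cell) : Prop :=
  l = [w; x; y; z] \/ l = [x; y; z; w] \/ l = [y; z; w; x] \/ l = [z; w; x; y].

Definition cond_ii (L vs : list cell) (a1 a2 b1 b2 : cell) : Prop :=
  forall i j, (i <= j)%nat -> (j < length vs)%nat ->
    ebar_at L vs i = ebar_at L vs j -> In (ebar_at L vs i) [a1; a2; b1; b2] ->
    (forall l, (i <= l <= j)%nat -> ebar_at L vs l = ebar_at L vs i) \/
    (forall l, (l < length vs)%nat -> (l <= i \/ j <= l)%nat -> ebar_at L vs l = ebar_at L vs i).

Definition cond_iii (L vs : list cell) (a1 a2 b1 b2 : cell) : Prop :=
  exists al be ga de, (al < be < ga)%nat /\ (ga < de < length vs)%nat /\
    let l := [ebar_at L vs al; ebar_at L vs be; ebar_at L vs ga; ebar_at L vs de] in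
    cyc_perm l a1 a2 b1 b2 \/ cyc_perm l b2 b1 a2 a1.

(* Since the external boundary is
   unique up to reversal and cyclic shift (and (ii), (iii) are invariant), we require
   that it exists and that (ii), (iii) hold for every external boundary. *)
Definition crosses {S : Type} (G : CAS S) (a1 b1 a2 b2 : cell) : Prop :=
  (exists d1, channel G a1 b1 d1) /\ (exists d2, channel G a2 b2 d2) /\
  NoDup [a1; a2; b1; b2] /\ In a1 (sources G) /\ In a2 (sources G) /\
  connected (cells G) /\
  (exists vs, external_boundary (cells G) vs) /\
  (forall vs, external_boundary (cells G) vs ->
     cond_ii (cells G) vs a1 a2 b1 b2 /\ cond_iii (cells G) vs a1 a2 b1 b2).

Definition ca1 : cell := (-1, 0).
Definition ca2 : cell := (0, -1).
Definition cg : cell := (0, 0).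
Definition cj : cell := (1, -1).
Definition cd : cell := (-1, 1).
Definition ch : cell := (1, 0).
Definition ce : cell := (0, 1).
Definition cf : cell := (1, 1).
Definition ci : cell := (2, 0).
Definition cc : cell := (0, 2).
Definition cb1 : cell := (2, 1).
Definition cb2 : cell := (1, 2).

Definition G_cells : list cell := [ca1; ca2; cg; cj; cd; ch; ce; cf; ci; cc; cb1; cb2].
Definition G_sources : list cell := [ca1; ca2].

(* x <- p;q : (p, q), 1-based indices into N4. *)
Definition G_rules : list (cell * (nat * nat)) :=
  [ (cb1, (1, 2)); (cb2, (1, 2)); (ce, (1, 2)); (ch, (1, 2));
    (cc, (2, 5)); (cd, (2, 5));
    (cf, (2, 1)); (cg, (2, 1));
    (ci, (5, 1)); (cj, (5, 1)) ]%nat.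

Definition rule_of (c : cell) : option (nat * nat) :=
  option_map snd (find (fun r => ceqb c (fst r)) G_rules).

Definition G_trans {S : Type} (bl : S) (c : cell) (s : list S) (t : nat) : S :=
  match rule_of c with
  | Some (p, q) => if Nat.even t then nth (p - 1) s bl else nth (q - 1) s bl
  | None => bl
  end.

Definition G_CAS {S : Type} (bl : S) : CAS S :=
  mkCAS S G_cells G_sources bl N4 (G_trans bl).

(* Main.v *)
Require Import Defs.
From Stdlib Require Import ZArith List Arith Lia Bool.
Import ListNotations.
Open Scope Z_scope.

Definition E : list (cell*cell) :=
 [((-1, 0), (0, 0)); ((-1, 0), (-1, 1)); ((0, -1), (1, -1));
  ((0, -1), (0, 0)); ((0, 0), (-1, 0)); ((0, 0), (0, -1)); ((1, -1), (2, -1)); ((1, -1), (0, -1)); ((2, -1), (1, -1));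
  ((2, -1), (2, 0)); ((-1, 1), (-1, 2)); ((-1, 1), (-1, 0));
  ((-1, 2), (0, 2)); ((-1, 2), (-1, 1)); ((2, 0), (3, 0)); ((2, 0), (2, -1)); ((3, 0), (2, 0)); ((3, 0), (3, 1));
  ((0, 2), (-1, 2)); ((0, 2), (0, 3)); ((0, 3), (1, 3)); ((0, 3), (0, 2)); ((3, 1), (3, 2)); ((3, 1), (3, 0));
  ((3, 2), (2, 2)); ((3, 2), (3, 1)); ((2, 2), (3, 2)); ((2, 2), (2, 3)); ((1, 3), (2, 3)); ((1, 3), (0, 3));
  ((2, 3), (1, 3)); ((2, 3), (2, 2))].

Definition memE (u v : cell) : bool := existsb (fun e => ceqb u (fst e) && ceqb v (snd e)) E.

Lemma ceqb_eq c d : ceqb c d = true -> c = d.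
Proof. destruct c, d; unfold ceqb; simpl. rewrite andb_true_iff, !Z.eqb_eq. intros [-> ->]; auto. Qed.
Lemma ceqb_refl c : ceqb c c = true.
Proof. destruct c; unfold ceqb; simpl; rewrite !Z.eqb_refl; auto. Qed.
Lemma memb_In c l : memb c l = true -> In c l.
Proof. unfold memb. rewrite existsb_exists. intros [x [H1 H2]]. apply ceqb_eq in H2; subst; auto. Qed.
Lemma In_memb c l : In c l -> memb c l = true.
Proof. intros H. unfold memb. apply existsb_exists. exists c; split; auto using ceqb_refl. Qed.

Lemma In_cells x y : In (x, y) G_cells ->
  (x = -1 /\ y = 0) \/ (x = 0 /\ y = -1) \/ (x = 0 /\ y = 0) \/ (x = 1 /\ y = -1) \/
  (x = -1 /\ y = 1) \/ (x = 1 /\ y = 0) \/ (x = 0 /\ y = 1) \/ (x = 1 /\ y = 1) \/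
  (x = 2 /\ y = 0) \/ (x = 0 /\ y = 2) \/ (x = 2 /\ y = 1) \/ (x = 1 /\ y = 2).
Proof.
  cbv [G_cells ca1 ca2 cg cj cd ch ce cf ci cc cb1 cb2 In].
  intros H; repeat destruct H as [H|H]; try (injection H; intros; subst; tauto); destruct H.
Qed.

Ltac finish_conc H :=
  repeat match goal with Hh : _ |- _ => revert Hh end; vm_compute; intros;
  first [ reflexivity | discriminate | exfalso; match goal with Hh : _ -> False |- _ => apply Hh; reflexivity end ].

Lemma In_cells' p : In p G_cells ->
  p = (-1, 0) \/ p = (0, -1) \/ p = (0, 0) \/ p = (1, -1) \/ p = (-1, 1) \/ p = (1, 0) \/
  p = (0, 1) \/ p = (1, 1) \/ p = (2, 0) \/ p = (0, 2) \/ p = (2, 1) \/ p = (1, 2) \/ False.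
Proof.
  cbv [G_cells ca1 ca2 cg cj cd ch ce cf ci cc cb1 cb2 In]. intuition.
Qed.

Ltac solve_vars := repeat match goal with
 | H : ?x - 1 = ?c |- _ => is_var x; assert (x = c + 1) by lia; subst x
 | H : ?x = ?c |- _ => is_var x; subst x
end.

Ltac caseL H := apply memb_In, In_cells' in H;
  repeat destruct H as [H|H]; try (injection H as ? ?); try (destruct H); solve_vars.

Ltac finish_sep Hs P Q :=
  let E1 := fresh "E1" in let E2 := fresh "E2" in
  destruct (memb P G_cells) eqn:E1;
  [ caseL E1; finish_conc Hs
  | destruct (memb Q G_cells) eqn:E2; [ caseL E2; finish_conc Hs | congruence ] ].

Lemma lemA u v : adjc u v -> separating G_cells u v -> memE u v = true.
Proof.
  destruct u as [x y], v as [x' y']. unfold adjc, separating; cbn [fst snd]. intros Ha Hs.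
  assert ((x' = x + 1 /\ y' = y) \/ (x' = x - 1 /\ y' = y) \/ (x' = x /\ y' = y + 1) \/ (x' = x /\ y' = y - 1)) as Hc by lia.
  clear Ha.
  destruct Hc as [[-> ->]|[[-> ->]|[[-> ->]|[-> ->]]]]; unfold edge_cells in Hs; cbn [fst snd] in Hs.
  - rewrite Z.eqb_refl, Z.min_l in Hs by lia. cbn [fst snd] in Hs. finish_sep Hs (x, y) (x, y - 1).
  - rewrite Z.eqb_refl, Z.min_r in Hs by lia. cbn [fst snd] in Hs. finish_sep Hs (x - 1, y) (x - 1, y - 1).
  - rewrite (proj2 (Z.eqb_neq y (y+1))), Z.min_l in Hs by lia. cbn [fst snd] in Hs. finish_sep Hs (x, y) (x - 1, y).
  - rewrite (proj2 (Z.eqb_neq y (y-1))), Z.min_r in Hs by lia. cbn [fst snd] in Hs. finish_sep Hs (x, y - 1) (x - 1, y - 1).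
Qed.

Definition d0 : cell := (0, 0).

Fixpoint nodupb (l : list cell) : bool :=
  match l with [] => true | x :: r => negb (memb x r) && nodupb r end.

Lemma NoDup_nodupb l : NoDup l -> nodupb l = true.
Proof.
  induction 1; simpl; auto. rewrite IHNoDup, andb_true_r.
  destruct (memb x l) eqn:M; auto. apply memb_In in M; contradiction.
Qed.

Lemma nodupb_NoDup l : nodupb l = true -> NoDup l.
Proof.
  induction l; simpl; intros; constructor.
  - apply andb_true_iff in H as [H _]. intro Hi. apply In_memb in Hi. rewrite Hi in H. discriminate.
  - apply IHl. apply andb_true_iff in H as [_ H]; auto.
Qed.

Fixpoint chainE (l : list cell) : bool :=
  match l with
  | a :: ((b :: _) as rest) => memE a b && chainE rest
  | _ => true
  end.

Definition ext (P : list (list cell)) : list (list cell) :=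
  flat_map (fun p => map (fun e => fst e :: p)
     (filter (fun e => ceqb (snd e) (hd d0 p) && negb (memb (fst e) p)) E)) P.

Fixpoint paths (n : nat) : list (list cell) :=
  match n with
  | O => []
  | S O => []
  | S (S O) => map (fun e => [fst e; snd e]) E
  | S k => ext (paths k)
  end.

Lemma memE_In u v : memE u v = true -> In (u, v) E.
Proof.
  unfold memE. rewrite existsb_exists. intros [[a b] [H1 H2]]. simpl in H2.
  apply andb_true_iff in H2 as [H2 H3]. apply ceqb_eq in H2, H3. subst; auto.
Qed.

Lemma paths_complete : forall vs, (2 <= length vs)%nat -> chainE vs = true -> nodupb vs = true ->
  In vs (paths (length vs)).
Proof.
  induction vs as [|w p IH]; intros Hl Hc Hn; [simpl in Hl; lia|].
  destruct p as [|w' p']; [simpl in Hl; lia|].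
  cbn [chainE nodupb] in Hc, Hn.
  apply andb_true_iff in Hc as [Hc1 Hc2].
  apply andb_true_iff in Hn as [Hn1 Hn2].
  destruct p' as [|w'' p''].
  - change (In [w; w'] (map (fun e => [fst e; snd e]) E)). apply in_map_iff. exists (w, w'). split; auto. apply memE_In; auto.
  - change (In (w :: w' :: w'' :: p'') (ext (paths (length (w' :: w'' :: p''))))).
    unfold ext. apply in_flat_map. exists (w' :: w'' :: p''). split.
    + apply IH; auto. simpl; lia.
    + apply in_map_iff. exists (w, w'). split; auto. apply filter_In. split.
      * apply memE_In; auto.
      * cbn [fst snd hd]. rewrite ceqb_refl. exact Hn1.
Qed.

Lemma paths17 : paths 17 = [].
Proof. vm_compute. reflexivity. Qed.

Lemma paths_big m : paths (17 + m) = [].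
Proof.
  induction m. apply paths17.
  replace (17 + S m)%nat with (S (S (S (15 + m)))) by lia.
  change (paths (S (S (S (15 + m))))) with (ext (paths (S (S (15 + m))))).
  replace (S (S (15 + m))) with (17 + m)%nat by lia. rewrite IHm. reflexivity.
Qed.

Definition four := [ca1; ca2; cb1; cb2].

Definition cond_iib (vs : list cell) : bool :=
  let n := length vs in
  let eb := ebar_at G_cells vs in
  forallb (fun i => forallb (fun j =>
    implb (Nat.leb i j && ceqb (eb i) (eb j) && memb (eb i) four)
      (forallb (fun l => ceqb (eb l) (eb i)) (seq i (j - i + 1)) ||
       forallb (fun l => implb (Nat.leb l i || Nat.leb j l) (ceqb (eb l) (eb i))) (seq 0 n)))
    (seq 0 n)) (seq 0 n).

Fixpoint lceqb (l m : list cell) : bool :=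
  match l, m with
  | [], [] => true
  | a :: l', b :: m' => ceqb a b && lceqb l' m'
  | _, _ => false
  end.

Lemma lceqb_eq l m : lceqb l m = true -> l = m.
Proof.
  revert m; induction l; destruct m; simpl; intros H; try discriminate; auto.
  apply andb_true_iff in H as [H1 H2]. apply ceqb_eq in H1. f_equal; auto.
Qed.

Definition cycb (l : list cell) (w x y z : cell) : bool :=
  lceqb l [w; x; y; z] || lceqb l [x; y; z; w] || lceqb l [y; z; w; x] || lceqb l [z; w; x; y].

Lemma cycb_ok l w x y z : cycb l w x y z = true -> cyc_perm l w x y z.
Proof.
  unfold cycb, cyc_perm. intros H. repeat rewrite orb_true_iff in H.
  destruct H as [[[H|H]|H]|H]; apply lceqb_eq in H; tauto.
Qed.

Definition cond_iiib (vs : list cell) : bool :=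
  let n := length vs in
  let ebs := map (ebar_at G_cells vs) (seq 0 n) in
  let eb := fun k => nth k ebs d0 in
  existsb (fun al => existsb (fun be => existsb (fun ga => existsb (fun de =>
    (let l := [eb al; eb be; eb ga; eb de] in cycb l ca1 ca2 cb1 cb2 || cycb l cb2 cb1 ca2 ca1))
   (seq (S ga) (n - S ga))) (seq (S be) (n - S be))) (seq (S al) (n - S al))) (seq 0 n).

Definition closeb (p : list cell) : bool :=
  memE (nth (length p - 1) p d0) (nth 0 p d0).

Definition final_ok : bool :=
  forallb (fun n => forallb (fun p => negb (closeb p) || (cond_iib p && cond_iiib p)) (paths n)) (seq 3 14).

Lemma final_ok_true : final_ok = true.
Proof. vm_compute. reflexivity. Qed.

Lemma nth_ebs vs n k : (k < n)%nat ->
  nth k (map (ebar_at G_cells vs) (seq 0 n)) d0 = ebar_at G_cells vs k.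
Proof.
  intros Hk. rewrite (nth_indep _ d0 (ebar_at G_cells vs 0%nat)) by (rewrite length_map, length_seq; lia).
  rewrite map_nth, seq_nth by lia. reflexivity.
Qed.

Lemma cond_iib_ok vs : cond_iib vs = true -> cond_ii G_cells vs ca1 ca2 cb1 cb2.
Proof.
  unfold cond_iib, cond_ii. intros H i j Hij Hj Heq Hin.
  rewrite forallb_forall in H. specialize (H i ltac:(apply in_seq; lia)).
  rewrite forallb_forall in H. specialize (H j ltac:(apply in_seq; lia)).
  assert (memb (ebar_at G_cells vs i) four = true) as Hm by (apply In_memb; exact Hin).
  rewrite Hm in H. rewrite Heq, ceqb_refl in H.
  assert (Nat.leb i j = true) as Hl by (apply Nat.leb_le; lia). rewrite Hl in H. simpl in H.
  apply orb_true_iff in H as [H|H]; [left|right]; rewrite forallb_forall in H.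
  - intros l Hl'. specialize (H l ltac:(apply in_seq; lia)). apply ceqb_eq in H. congruence.
  - intros l Hl' Hor. specialize (H l ltac:(apply in_seq; lia)).
    assert (Nat.leb l i || Nat.leb j l = true) as Ho by (apply orb_true_iff; destruct Hor; [left|right]; apply Nat.leb_le; lia).
    rewrite Ho in H. simpl in H. apply ceqb_eq in H. congruence.
Qed.

Lemma cond_iiib_ok vs : cond_iiib vs = true -> cond_iii G_cells vs ca1 ca2 cb1 cb2.
Proof.
  unfold cond_iiib, cond_iii. intros H.
  apply existsb_exists in H as [al [Ha H]]. apply existsb_exists in H as [be [Hb H]].
  apply existsb_exists in H as [ga [Hg H]]. apply existsb_exists in H as [de [Hd H]].
  apply in_seq in Ha, Hb, Hg, Hd.
  exists al, be, ga, de. split; [lia|]. split; [lia|].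
  rewrite !nth_ebs in H by lia.
  apply orb_true_iff in H as [H|H]; [left|right]; apply cycb_ok; exact H.
Qed.

Lemma chainE_of vs : (forall i, (S i < length vs)%nat -> memE (nth i vs d0) (nth (S i) vs d0) = true) ->
  chainE vs = true.
Proof.
  induction vs as [|a r IH]; intros H; [reflexivity|].
  destruct r as [|b r']; [reflexivity|].
  change (memE a b && chainE (b :: r') = true). apply andb_true_iff; split.
  { exact (H 0%nat ltac:(simpl; lia)). }
  apply IH. intros i Hi. apply (H (S i)). simpl in *; lia.
Qed.

Lemma boundary_conds vs : external_boundary G_cells vs ->
  cond_ii G_cells vs ca1 ca2 cb1 cb2 /\ cond_iii G_cells vs ca1 ca2 cb1 cb2.
Proof.
  intros (H3 & Hnd & Hadj & Hsep & _).
  set (n := length vs) in *.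
  assert (He : forall i, (i < n)%nat -> memE (vtx vs i) (vnext vs i) = true)
    by (intros; apply lemA; auto).
  assert (Hc : chainE vs = true).
  { apply chainE_of. intros i Hi. specialize (He i ltac:(unfold n; lia)).
    unfold vtx, vnext in He. rewrite Nat.mod_small in He by (unfold n; lia).
    rewrite Nat.add_1_r in He. exact He. }
  assert (Hcl : closeb vs = true).
  { specialize (He (n - 1)%nat ltac:(lia)). unfold vtx, vnext in He.
    replace (n - 1 + 1)%nat with n in He by lia. rewrite Nat.mod_same in He by lia.
    exact He. }
  pose proof (paths_complete vs ltac:(lia) Hc (NoDup_nodupb _ Hnd)) as Hp.
  assert (Hn : (n < 17)%nat).
  { destruct (Nat.lt_ge_cases n 17) as [?|Hge]; auto.
    replace (length vs) with (17 + (n - 17))%nat in Hp by (unfold n; lia).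
    rewrite paths_big in Hp. destruct Hp. }
  pose proof final_ok_true as F. unfold final_ok in F. rewrite forallb_forall in F.
  specialize (F n ltac:(apply in_seq; lia)). rewrite forallb_forall in F.
  specialize (F vs Hp). rewrite Hcl in F. simpl in F.
  apply andb_true_iff in F as [F1 F2]. split; [apply cond_iib_ok | apply cond_iiib_ok]; auto.
Qed.

Definition vs0 : list cell :=
  [(0, -1); (1, -1); (2, -1); (2, 0); (3, 0); (3, 1); (3, 2); (2, 2); (2, 3); (1, 3); (0, 3);
   (0, 2); (-1, 2); (-1, 1); (-1, 0); (0, 0)].

Definition bnd_checks : bool :=
  nodupb vs0 &&
  forallb (fun i => Z.eqb (Z.abs (fst (vtx vs0 i) - fst (vnext vs0 i)) + Z.abs (snd (vtx vs0 i) - snd (vnext vs0 i))) 1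
     && (let p := edge_cells (vtx vs0 i) (vnext vs0 i) in negb (Bool.eqb (memb (fst p) G_cells) (memb (snd p) G_cells))))
    (seq 0 16) &&
  forallb (fun c => Nat.odd (ray_count vs0 c)) G_cells.

Lemma bnd_checks_true : bnd_checks = true.
Proof. vm_compute. reflexivity. Qed.

Lemma boundary_exists : external_boundary G_cells vs0.
Proof.
  pose proof bnd_checks_true as H. unfold bnd_checks in H.
  apply andb_true_iff in H as [H H3]. apply andb_true_iff in H as [H1 H2].
  rewrite forallb_forall in H2, H3.
  split; [vm_compute; lia|]. split; [apply nodupb_NoDup; auto|].
  split; [|split].
  - intros i Hi. specialize (H2 i ltac:(apply in_seq; simpl in Hi; lia)).
    apply andb_true_iff in H2 as [H2 _]. apply Z.eqb_eq in H2. exact H2.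
  - intros i Hi. specialize (H2 i ltac:(apply in_seq; simpl in Hi; lia)).
    apply andb_true_iff in H2 as [_ H2]. unfold separating.
    destruct (memb (fst (edge_cells (vtx vs0 i) (vnext vs0 i))) G_cells),
             (memb (snd (edge_cells (vtx vs0 i) (vnext vs0 i))) G_cells); simpl in H2; congruence.
  - intros c Hc. apply H3; auto.
Qed.

Definition to_g (c : cell) : list cell :=
  if ceqb c cj then [cj; ch; cg] else
  if ceqb c cd then [cd; ce; cg] else
  if ceqb c cf then [cf; ce; cg] else
  if ceqb c ci then [ci; ch; cg] else
  if ceqb c cc then [cc; ce; cg] else
  if ceqb c cb1 then [cb1; cf; ce; cg] else
  if ceqb c cb2 then [cb2; cf; ce; cg] else
  if ceqb c cg then [cg] else [c; cg].

Definition pth (x y : cell) : list cell := tl (to_g x) ++ tl (rev (to_g y)).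

Fixpoint chainb (l : list cell) : bool :=
  match l with
  | a :: ((b :: _) as rest) => Z.eqb (Z.abs (fst a - fst b) + Z.abs (snd a - snd b)) 1 && chainb rest
  | _ => true
  end.

Lemma chainb_ok l : chainb l = true -> chain l.
Proof.
  induction l as [|a r IH]; simpl; auto. destruct r as [|b r']; auto.
  intros H. apply andb_true_iff in H as [H1 H2]. split; auto. apply Z.eqb_eq in H1. exact H1.
Qed.

Definition conn_check : bool :=
  forallb (fun x => forallb (fun y =>
    forallb (fun z => memb z G_cells) (pth x y) && chainb (x :: pth x y) && ceqb (last (x :: pth x y) x) y)
   G_cells) G_cells.

Lemma conn_check_true : conn_check = true.
Proof. vm_compute. reflexivity. Qed.

Lemma conn : connected G_cells.
Proof.
  intros x y Hx Hy. pose proof conn_check_true as H. unfold conn_check in H.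
  rewrite forallb_forall in H. specialize (H x Hx). rewrite forallb_forall in H. specialize (H y Hy).
  apply andb_true_iff in H as [H H3]. apply andb_true_iff in H as [H1 H2].
  exists (pth x y). split; [|split].
  - apply Forall_forall. intros z Hz. rewrite forallb_forall in H1. apply memb_In; auto.
  - apply chainb_ok; auto.
  - apply ceqb_eq; auto.
Qed.

Section Sim.
Variable St : Type.
Variable bl : St.
Variable iota : input St.
Let G := G_CAS bl.
Notation cf_ t x := (conf G iota t x).

Lemma s_b1 t : cf_ (S t) cb1 = if Nat.even (S t) then cf_ t cf else cf_ t ci. Proof. reflexivity. Qed.
Lemma s_b2 t : cf_ (S t) cb2 = if Nat.even (S t) then cf_ t cc else cf_ t cf. Proof. reflexivity. Qed.
Lemma s_e t : cf_ (S t) ce = if Nat.even (S t) then cf_ t cd else cf_ t cg. Proof. reflexivity. Qed.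
Lemma s_h t : cf_ (S t) ch = if Nat.even (S t) then cf_ t cg else cf_ t cj. Proof. reflexivity. Qed.
Lemma s_c t : cf_ (S t) cc = if Nat.even (S t) then cf_ t ce else cf_ t cc. Proof. reflexivity. Qed.
Lemma s_d t : cf_ (S t) cd = if Nat.even (S t) then cf_ t ca1 else cf_ t cd. Proof. reflexivity. Qed.
Lemma s_f t : cf_ (S t) cf = if Nat.even (S t) then cf_ t ch else cf_ t ce. Proof. reflexivity. Qed.
Lemma s_g t : cf_ (S t) cg = if Nat.even (S t) then cf_ t ca2 else cf_ t ca1. Proof. reflexivity. Qed.
Lemma s_i t : cf_ (S t) ci = if Nat.even (S t) then cf_ t ci else cf_ t ch. Proof. reflexivity. Qed.
Lemma s_j t : cf_ (S t) cj = if Nat.even (S t) then cf_ t cj else cf_ t ca2. Proof. reflexivity. Qed.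

End Sim.

Ltac steps := repeat (rewrite ?s_b1, ?s_b2, ?s_e, ?s_h, ?s_c, ?s_d, ?s_f, ?s_g, ?s_i, ?s_j).

Lemma ch1 (St : Type) (bl : St) : channel (G_CAS bl) ca1 cb1 5.
Proof.
  intros io _ t. split.
  - intros Ht. destruct t as [|[|[|[|[|n]]]]]; try lia.
    replace (S (S (S (S (S n)))) - 5)%nat with n by lia.
    steps. repeat rewrite ?Nat.even_succ, ?Nat.odd_succ. rewrite <- ?Nat.negb_even.
    destruct (Nat.even n); reflexivity.
  - intros Ht. destruct t as [|[|[|[|[|n]]]]]; try lia; steps; reflexivity.
Qed.

Lemma ch2 (St : Type) (bl : St) : channel (G_CAS bl) ca2 cb2 5.
Proof.
  intros io _ t. split.
  - intros Ht. destruct t as [|[|[|[|[|n]]]]]; try lia.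
    replace (S (S (S (S (S n)))) - 5)%nat with n by lia.
    steps. repeat rewrite ?Nat.even_succ, ?Nat.odd_succ. rewrite <- ?Nat.negb_even.
    destruct (Nat.even n); reflexivity.
  - intros Ht. destruct t as [|[|[|[|[|n]]]]]; try lia; steps; reflexivity.
Qed.

Lemma is4 (St : Type) (bl : St) : is_4CAS (G_CAS bl).
Proof.
  split; [|reflexivity].
  split; [apply nodupb_NoDup; vm_compute; reflexivity|].
  split; [intros c Hc; cbn [sources G_CAS G_sources In] in Hc; destruct Hc as [<-|[<-|[]]]; apply memb_In; vm_compute; reflexivity|].
  split; [apply nodupb_NoDup; vm_compute; reflexivity|].
  split; [apply memb_In; vm_compute; reflexivity|].
  intros c Hc Hns i Hi Hout s s' t Hs Hs' Hsame.
  cbn [cells G_CAS G_cells] in Hc.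
  cbn [sources G_CAS G_sources] in Hns.
  cbn [nbhd G_CAS N4 length] in Hi.
  cbn [blank G_CAS] in Hsame.
  repeat destruct Hc as [<-|Hc]; try (exfalso; apply Hns; simpl; tauto); try (destruct Hc);
  (destruct i as [|[|[|[|[|i]]]]]; [..|lia]);
  first [ exfalso; apply Hout; apply memb_In; vm_compute; reflexivity
        | cbn [trans G_CAS]; unfold G_trans; vm_compute rule_of; destruct (Nat.even t); apply Hsame; lia ].
Qed.

Close Scope Z_scope.

Theorem mainTheorem2 (S : Type) (HSfin : exists l : list S, forall x : S, In x l) (bl : S) :
  is_4CAS (G_CAS bl) /\
  channel (G_CAS bl) ca1 cb1 5 /\
  channel (G_CAS bl) ca2 cb2 5 /\
  crosses (G_CAS bl) ca1 cb1 ca2 cb2 /\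
  Nat.max 5 5 = 5%nat /\ ((5 + 5) / 2 = 5)%nat /\
  length (cells (G_CAS bl)) = 12%nat.
Proof.
  split; [apply is4|]. split; [apply ch1|]. split; [apply ch2|].
  split; [|split; [reflexivity|split; reflexivity]].
  split; [exists 5%nat; apply ch1|]. split; [exists 5%nat; apply ch2|].
  split; [apply nodupb_NoDup; vm_compute; reflexivity|].
  split; [simpl; auto|]. split; [simpl; auto|].
  split; [apply conn|]. split; [exists vs0; apply boundary_exists|].
  intros vs Hvs. apply boundary_conds. exact Hvs.
Qed.
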